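(* Let $I$ be a binary, friendship-uniform instance with common friendship value $\phi<1$ whose friendship graph $(N,F^* )$ has maximum degree $1$, and let $A$ be the (random) allocation output by FF-CT-RSD$^*$ on $I$ when all agents report their friendships truthfully and choose plots to maximize their utility. Then $\mathbb E(\mathrm{SW}(A))\ge\frac{\phi}{4\phi+4}\,\mathrm{OPT}(I)$.
   Context: Instance: agents $N$, $n=|N|$ plots $\mathcal V$, undirected plot graph $(\mathcal V,\mathcal E)$, binary valuations $u_i:\mathcal V\to\{0,1\}$, reciprocal friendship relation $F$ with $\phi_{i,j}=\phi>0$ for all $(i,j)\in F$; $F^*=\{\{i,j\}:(i,j)\in F\}$. For a bijection $A:N\to\mathcal V$, $U_i(A)=u_i(A(i))+\sum_{(i,j)\in F}\phi\,\mathbb I(\{A(i),A(j)\}\in\mathcal E)$, $\mathrm{SW}(A)=\sum_iU_i(A)$, $\mathrm{OPT}(I)=\max_A\mathrm{SW}(A)$. RSD$^*$: in each iteration, remaining agents report whether they value some available plot positively; if some do, one of them chosen uniformly at random picks a plot; otherwise remaining agents are arbitrarily paired with remaining plots and the procedure stops. FF-CT-RSD$^*$: each agent reports a friend (or none); let $P$ be the set of pairs $\{i,j\}$ who report each other. While some pair of adjacent plots is unoccupied and $P\ne\emptyset$, a uniformly random pair $\{i,j\}$ is removed from $P$ and $i,j$ pick plots consecutively in random order. Afterwards RSD$^*$ is run on the remaining agents and plots. Expectation is over the mechanism's randomness. *)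

(* Defs.v *)
From HB Require Import structures.
From mathcomp Require Import all_boot all_order all_algebra.
Set Implicit Arguments. Unset Strict Implicit. Unset Printing Implicit Defensive.
Import Order.TTheory GRing.Theory Num.Theory.
Local Open Scope ring_scope.

Section Mechanism.
Variables (R : realFieldType) (N V : finType).
Variable E : rel V.                 (* plot graph *)
Variable u : N -> V -> bool.
Variable F : rel N.
Variable phi : R.

Definition utility (i : N) (A : {ffun N -> V}) : R :=
  (u i (A i))%:R + \sum_(j | F i j && E (A i) (A j)) phi.

Definition SW (A : {ffun N -> V}) : R := \sum_(i : N) utility i A.

(* optimum over bijections (#|N| = #|V| is assumed in the theorem) *)
Definition OPT : R := \big[Num.max/0]_(A : {ffun N -> V} | injectiveb A) SW A.

(* state of the mechanism: partial allocation, remaining mutual-report pairs,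
   agent about to pick (if any), agent to pick right after (second of a pair) *)
Record state := MkState {
  alloc : {ffun N -> option V};
  pairs : {set {set N}};
  cur : option N;
  nxt : option N }.

Definition free (s : state) (v : V) : bool := [forall k, alloc s k != Some v].
Definition unplaced (s : state) (i : N) : bool := alloc s i == None.

Definition partial_inj (a : {ffun N -> option V}) : Prop :=
  forall i j v, a i = Some v -> a j = Some v -> i = j.

Definition wf_state (s : state) : Prop :=
  partial_inj (alloc s) /\
  (forall i, cur s = Some i -> unplaced s i) /\
  (forall j, nxt s = Some j -> unplaced s j /\ cur s <> Some j).

(* FF phase continues: some pair of (distinct) adjacent plots is unoccupied
   and P is nonempty *)
Definition ff_cond (s : state) : bool :=
  (pairs s != set0) &&
  [exists v, exists w, [&& v != w, E v w, free s v & free s w]].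

Definition rsd_set (s : state) : {set N} :=
  [set i | unplaced s i & [exists v, free s v && u i v]].

Definition pick_step (s : state) (v : V) : state :=
  MkState [ffun k => if cur s == Some k then Some v else alloc s k]
          (pairs s) (nxt s) None.

Definition draw_step (s : state) (p : {set N}) (i : N) : state :=
  MkState (alloc s) (pairs s :\ p) (Some i) [pick j in p :\ i].

(* truthful reports: P = F^* *)
Definition init_state : state :=
  MkState [ffun _ => None] [set [set x.1; x.2] | x : N * N & F x.1 x.2] None None.

Variable compl : state -> {ffun N -> V}.   (* arbitrary final pairing *)
Variable strat : state -> V.

Fixpoint eval (k : nat) (s : state) (g : {ffun N -> V} -> R) : R :=
  match k with
  | 0 => g (compl s)
  | k'.+1 =>
    match cur s with
    | Some _ => eval k' (pick_step s (strat s)) g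
    | None =>
      if ff_cond s then
        (#|pairs s|%:R)^-1 *
          \sum_(p in pairs s) ((#|p|%:R)^-1 * \sum_(i in p) eval k' (draw_step s p i) g)
      else if rsd_set s == set0 then g (compl s)
      else (#|rsd_set s|%:R)^-1 *
             \sum_(i in rsd_set s) eval k' (MkState (alloc s) (pairs s) (Some i) None) g
    end
  end.

(* enough fuel: every agent is placed within two steps *)
Definition fuel : nat := (3 * #|N|).+1.

Definition expect (s : state) (g : {ffun N -> V} -> R) : R := eval fuel s g.

End Mechanism.


Definition valid_completion (N V : finType) (compl : state N V -> {ffun N -> V}) : Prop :=
  forall s, partial_inj (alloc s) ->
    injectiveb (compl s) /\ (forall i v, alloc s i = Some v -> compl s i = v).

Definition spe (R : realFieldType) (N V : finType) (E : rel V) (u : N -> V -> bool)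
    (F : rel N) (phi : R) (compl : state N V -> {ffun N -> V})
    (strat : state N V -> V) : Prop :=
  forall s i, wf_state s -> cur s = Some i -> (exists v, free s v) ->
    free s (strat s) /\
    forall v, free s v ->
      expect E u compl strat (pick_step s v) (utility E u F phi i) <=
      expect E u compl strat (pick_step s (strat s)) (utility E u F phi i).

(* Main.v *)
Require Import Defs.
From HB Require Import structures.
From mathcomp Require Import all_boot all_order all_algebra.
From mathcomp Require Import zify ring lra.
Import Order.TTheory GRing.Theory Num.Theory.
Set Implicit Arguments. Unset Strict Implicit. Unset Printing Implicit Defensive.
Local Open Scope ring_scope.

Lemma fr_gen (P n1 n2 h1 h2 : nat) : (n1 <= n2 + h1 + h2)%N -> (h1 <= 1)%N -> (h2 <= 1)%N ->
  (minn P.+1 n1 <= minn P n2 + 2)%N.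
Proof. lia. Qed.
Lemma fr_ref (P n1 n2 h2 : nat) : (n1 <= n2 + 0 + h2)%N -> (h2 <= 1)%N ->
  (minn P.+1 n1 <= minn P n2 + 1)%N.
Proof. lia. Qed.

Lemma sum_bool (R : realFieldType) (T : finType) (b : T -> bool) :
  \sum_i ((b i : nat)%:R : R) = (#|[set i | b i]|)%:R.
Proof.
rewrite -natr_sum; congr (_%:R).
rewrite -sum1_card [RHS]big_mkcond /=; apply: eq_bigr => i _.
by rewrite inE; case: (b i).
Qed.
Section Proof.
Variables (R : realFieldType) (N V : finType) (E : rel V) (u : N -> V -> bool)
  (F : rel N) (phi : R).
Hypotheses (hNV : #|N| = #|V|) (hEsym : symmetric E) (hFsym : symmetric F)
  (hFirr : irreflexive F) (hdeg : forall i : N, (#|[set j | F i j]| <= 1)%N)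
  (hphi0 : 0 < phi) (hphi1 : phi < 1).
Variables (compl : state N V -> {ffun N -> V}) (strat : state N V -> V).
Hypotheses (hcompl : valid_completion compl) (hstrat : spe E u F phi compl strat).

Local Notation ev := (@eval R N V E u compl strat).
Local Notation fr := (@Defs.free N V).
Local Notation Ut := (utility E u F phi).
Local Notation st := (state N V).

Lemma partner a b : F a b -> forall j, F a j = (j == b).
Proof.
move=> hab j; apply/idP/eqP => [haj|->//].
apply/eqP; apply/negPn/negP => hjb.
have : (#|[set j; b]| <= #|[set j0 | F a j0]|)%N.
  by apply: subset_leq_card; apply/subsetP => z; rewrite !inE => /orP[]/eqP->.
by rewrite cards2 hjb; have := hdeg a; lia.
Qed.

Definition P0 : {set {set N}} := pairs (init_state V F).

Lemma inP0 p : p \in P0 -> exists a b, [/\ F a b, a != b & p = [set a; b]].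
Proof.
case/imsetP => -[a b]; rewrite inE /= => hab ->; exists a, b; split => //.
by apply/eqP => e; move: hab; rewrite e hFirr.
Qed.

Lemma P0_mem p k : p \in P0 -> k \in p -> exists b, F k b /\ p = [set k; b].
Proof.
case/inP0 => a [b [hab _ ->]]; rewrite !inE => /orP[]/eqP->.
  by exists b.
by exists a; rewrite hFsym setUC.
Qed.

Lemma P0_disj p q k : p \in P0 -> q \in P0 -> k \in p -> k \in q -> p = q.
Proof.
move=> hp hq kp kq.
case: (P0_mem hp kp) => b [hb ->]; case: (P0_mem hq kq) => b' [hb' ->].
by move: hb'; rewrite (partner hb) => /eqP->.
Qed.

Lemma P0_ne p : p \in P0 -> p != set0.
Proof. by case/inP0 => a [b [_ _ ->]]; apply/set0Pn; exists a; rewrite !inE eqxx. Qed.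

Definition noFA (s : st) :=
  ~~ [exists v, exists w, [&& v != w, E v w, fr s v & fr s w]].
Definition pairs_ok (s : st) := forall p, p \in pairs s -> forall k, k \in p ->
  [/\ alloc s k = None, cur s <> Some k & nxt s <> Some k].
Definition GInv (s : st) :=
  [/\ partial_inj (alloc s), pairs s \subset P0,
      (forall i, cur s = Some i -> alloc s i = None),
      (forall j, nxt s = Some j -> alloc s j = None /\ cur s <> Some j)
    & noFA s \/ pairs_ok s].

Lemma GInv_wf s : GInv s -> wf_state s.
Proof.
case=> h1 _ h3 h4 _; split => //; split.
  by move=> i /h3; rewrite /unplaced => ->.
by move=> j /h4 [h5 h6]; rewrite /unplaced h5.
Qed.

Lemma alloc_pick (s : st) (i : N) (v : V) (k : N) : cur s = Some i ->
  alloc (pick_step s v) k = if k == i then Some v else alloc s k.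
Proof.
by move=> hc; rewrite /= ffunE hc; case: (eqVneq k i) => [->|ne]; rewrite ?eqxx //;
   case: eqP => // -[e]; move: ne; rewrite e eqxx.
Qed.

Lemma free_pick (s : st) (i : N) (v w : V) : cur s = Some i -> alloc s i = None ->
  fr (pick_step s v) w = fr s w && (w != v).
Proof.
move=> hc hi; apply/forallP/andP => [h|[/forallP h1 h2] k].
  split; last by have := h i; rewrite (alloc_pick _ _ hc) eqxx; apply: contra => /eqP->.
  apply/forallP => k; have := h k; rewrite (alloc_pick _ _ hc).
  by case: (eqVneq k i) => [->|//]; rewrite hi.
rewrite (alloc_pick _ _ hc); case: (eqVneq k i) => _; last exact: h1.
by apply: contra h2 => /eqP[->].
Qed.

Lemma GInv_pick (s : st) (i : N) (v : V) : GInv s -> cur s = Some i -> fr s v -> GInv (pick_step s v).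
Proof.
case=> hinj hP hcur hnxt hdis hc hv.
have hi := hcur i hc.
split => //.
- move=> i1 i2 w; rewrite !(alloc_pick _ _ hc).
  case: (eqVneq i1 i) => [->|n1]; case: (eqVneq i2 i) => [->|n2] //.
  + move=> [<-] h2; move/forallP: hv => /(_ i2); by rewrite h2 eqxx.
  + move=> h1 [e]; move/forallP: hv => /(_ i1); by rewrite h1 e eqxx.
  + exact: hinj.
- move=> j /= hj; have [h1 h2] := hnxt j hj; rewrite (alloc_pick _ _ hc).
  by case: (eqVneq j i) => // e; subst; rewrite hc in h2.
- case: hdis => [hn|hok]; [left|right].
  + apply: contra hn => /existsP[v1 /existsP[w1 /and4P[a1 a2 a3 a4]]].
    apply/existsP; exists v1; apply/existsP; exists w1.
    by rewrite a1 a2 /=; move: a3 a4; rewrite !(free_pick _ _ hc hi) => /andP[->_]/andP[->_].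
  + move=> p hp k hk; have [h1 h2 h3] := hok p hp k hk; split => //=.
    by rewrite (alloc_pick _ _ hc); case: (eqVneq k i) => // e; subst; rewrite hc in h2.
Qed.

Lemma pick_pair (a b : N) : a != b -> [pick j in [set a; b] :\ a] = Some b.
Proof. by move=> ab; rewrite setU1K ?pick_set1 // inE. Qed.

Lemma GInv_draw (s : st) (p : {set N}) (i : N) : GInv s -> cur s = None -> ff_cond E s ->
  p \in pairs s -> i \in p -> GInv (draw_step s p i).
Proof.
case=> hinj hP hcur hnxt hdis hc /andP[_ hex] hp hi.
have hok : pairs_ok s by case: hdis => //; rewrite /noFA hex.
have hpP : p \in P0 by apply: (subsetP hP).
split => //=.
- by apply: subset_trans (subsetDl _ _) hP.
- by move=> i0 [<-]; case: (hok p hp i hi).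
- move=> j; case: pickP => // j0; rewrite !inE => /andP[ne hj] [<-].
  by split; [case: (hok p hp j0 hj)| move=> [e]; move: ne; rewrite e eqxx].
- right => q; rewrite !inE => /andP[nqp hq] k hk.
  have hqP : q \in P0 by apply: (subsetP hP).
  have [h1 _ _] := hok q hq k hk; split => //=.
  + move=> [e]; subst; by move: nqp; rewrite (P0_disj hqP hpP hk hi) eqxx.
  + case: pickP => // j0; rewrite !inE => /andP[_ hj] [e]; subst.
    by move: nqp; rewrite (P0_disj hqP hpP hk hj) eqxx.
Qed.

Lemma GInv_rsd (s : st) (i : N) : GInv s -> cur s = None -> ~~ ff_cond E s ->
  i \in rsd_set u s -> GInv (MkState (alloc s) (pairs s) (Some i) None).
Proof.
case=> hinj hP hcur hnxt hdis hc hff; rewrite inE => /andP[/eqP hi _].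
split => //= [i0 [<-] //|].
case: (eqVneq (pairs s) set0) => [e|ne].
  by right => p /=; rewrite e inE.
by left; move: hff; rewrite /ff_cond ne /=.
Qed.

Lemma free_exists (s : st) (i : N) : GInv s -> cur s = Some i -> exists v, fr s v.
Proof.
case=> hinj _ hcur _ _ hc; have hi := hcur i hc.
case: (boolP [exists v, fr s v]) => [/existsP//|]; rewrite negb_exists => /forallP hall.
pose Pl := [set k | alloc s k != None].
have h1 : (#|Pl| < #|N|)%N.
  rewrite -cardsT; apply: proper_card; rewrite properT.
  by apply/eqP => e; have := in_setT i; rewrite -e inE hi.
have h2 : (#|V| <= #|Pl|)%N.
  have -> : #|V| = #|[set Some v | v in [set: V]]|.
    by rewrite card_imset ?cardsT //; move=> ? ? [].
  apply: leq_trans (leq_imset_card (fun k => alloc s k) _).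
  apply: subset_leq_card; apply/subsetP => ov /imsetP[v _ ->].
  have := hall v; rewrite negb_forall => /existsP[k]; rewrite negbK => /eqP hk.
  by apply/imsetP; exists k; rewrite ?inE ?hk.
by move: h1 h2; rewrite hNV; lia.
Qed.

Lemma avg_in (T : finType) (S : {set T}) (f : T -> R) lo hi : S != set0 ->
  (forall x, x \in S -> lo <= f x <= hi) ->
  lo <= (#|S|%:R)^-1 * \sum_(x in S) f x <= hi.
Proof.
move=> hS h.
have hS' : (#|S|%:R : R) != 0 by rewrite pnatr_eq0 -lt0n card_gt0.
have e : forall c : R, (#|S|%:R)^-1 * \sum_(x in S) c = c.
  by move=> c; rewrite sumr_const -(mulr_natl c) mulrA mulVf // mul1r.
have hinv : 0 <= (#|S|%:R : R)^-1 by rewrite invr_ge0 ler0n.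
apply/andP; split.
  rewrite -{1}(e lo); apply: ler_wpM2l => //; apply: ler_sum => x hx.
  by case/andP: (h x hx).
rewrite -{1}(e hi); apply: ler_wpM2l => //; apply: ler_sum => x hx.
by case/andP: (h x hx).
Qed.

Definition ext (a : {ffun N -> option V}) (A : {ffun N -> V}) :=
  forall i v, a i = Some v -> A i = v.

Lemma ev_cur (k : nat) (s : st) g i : cur s = Some i ->
  ev k.+1 s g = ev k (pick_step s (strat s)) g.
Proof. by move=> hc; rewrite /= hc. Qed.

Lemma strat_free (s : st) i : GInv s -> cur s = Some i -> fr s (strat s).
Proof. by move=> hI hc; have [] := hstrat (GInv_wf hI) hc (free_exists hI hc). Qed.

Lemma evB (k : nat) : forall (s : st) (g : {ffun N -> V} -> R) (lo hi : R), GInv s ->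
  (forall A : {ffun N -> V}, injectiveb A -> ext (alloc s) A -> lo <= g A <= hi) ->
  lo <= ev k s g <= hi.
Proof.
elim: k => [|k IH] s g lo hi hI hg.
  have hinj : partial_inj (alloc s) by case: hI.
  have [h1 h2] := hcompl hinj; exact: hg.
case hc: (cur s) => [i|].
  have hcur : alloc s i = None by case: hI => _ _ h _ _; apply: h.
  have hfree := strat_free hI hc.
  rewrite (ev_cur _ _ hc); apply: IH; first exact: GInv_pick hI hc hfree.
  move=> A hA hext; apply: hg => // j w hj; apply: hext.
  rewrite (alloc_pick _ _ hc); case: eqVneq => // e; subst.
  by rewrite hcur in hj.
rewrite /= hc; case hff: (ff_cond E s).
  apply: avg_in; first by case/andP: hff.
  move=> p hp; have hp0 : p \in P0 by case: hI => _ hP _ _ _; apply: (subsetP hP).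
  apply: avg_in; first exact: P0_ne.
  move=> j hj; apply: IH; first exact: GInv_draw.
  by move=> A hA hext; apply: hg.
case: ifP => hr.
  have hinj : partial_inj (alloc s) by case: hI.
  have [h1 h2] := hcompl hinj; exact: hg.
apply: avg_in; first by rewrite hr.
move=> j hj; apply: IH; first by apply: GInv_rsd => //; rewrite hff.
by move=> A hA hext; apply: hg.
Qed.

Lemma eval_det (k : nat) (s : st) (g : {ffun N -> V} -> R) (c : R) : GInv s ->
  (forall A : {ffun N -> V}, injectiveb A -> ext (alloc s) A -> g A = c) -> ev k s g = c.
Proof.
move=> hI h; have /andP[h1 h2] : c <= ev k s g <= c.
  by apply: (evB k hI) => A hA hx; rewrite (h A hA hx) lexx.
by apply/eqP; rewrite eq_le h1 h2.
Qed.

Lemma util_val a b (A : {ffun N -> V}) : F a b ->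
  Ut a A = (u a (A a))%:R + (if E (A a) (A b) then phi else 0).
Proof.
move=> hab; rewrite /utility; congr (_ + _).
rewrite (eq_bigl (fun j => (j == b) && E (A a) (A b))); last first.
  by move=> j; rewrite (partner hab); case: eqVneq => // ->.
case: (E (A a) (A b)).
  by rewrite (big_pred1 b) // => j; rewrite andbT.
by rewrite big_pred0 // => j; rewrite andbF.
Qed.

Lemma F_neq a b : F a b -> a != b.
Proof. by move=> h; apply/eqP => e; move: h; rewrite e hFirr. Qed.

Lemma second_val (k : nat) (t : st) a b v w : GInv t -> cur t = Some b ->
  alloc t a = Some v -> F b a -> fr t w ->
  ev k (pick_step t w) (Ut b) = (u b w)%:R + (if E w v then phi else 0).
Proof.
move=> hI hc ha hba hw; apply: eval_det; first exact: GInv_pick hI hc hw.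
move=> A hA hext; rewrite (util_val _ hba).
have hb : alloc t b = None by case: hI => _ _ h _ _; apply: h.
have -> : A b = w by apply: hext; rewrite (alloc_pick _ _ hc) eqxx.
have -> // : A a = v.
apply: hext; rewrite (alloc_pick _ _ hc); case: eqVneq => // e; subst.
by rewrite hb in ha.
Qed.

Lemma first_val (k : nat) (d : st) a b v : GInv d -> cur d = Some a -> nxt d = Some b ->
  F a b -> fr d v ->
  ev k.+1 (pick_step d v) (Ut a) =
  (u a v)%:R + (if E v (strat (pick_step d v)) then phi else 0).
Proof.
move=> hI hc hn hab hv.
set s1 := pick_step d v.
have c1 : cur s1 = Some b by [].
have hI1 : GInv s1 by apply: GInv_pick hI hc hv.
have hf1 := strat_free hI1 c1.
rewrite (ev_cur _ _ c1); apply: eval_det; first exact: GInv_pick hI1 c1 hf1.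
move=> A hA hext; rewrite (util_val _ hab).
have hab' := F_neq hab.
have -> : A b = strat s1 by apply: hext; rewrite (alloc_pick _ _ c1) eqxx.
have -> // : A a = v.
apply: hext; rewrite (alloc_pick _ _ c1) (negbTE hab') (alloc_pick _ _ hc) eqxx //.
Qed.

Definition G (a : {ffun N -> option V}) (k : N) : R :=
  if a k is Some v then
    (u k v)%:R + \sum_(j | F k j) (if a j is Some w then (if E v w then phi else 0) else 0)
  else 0.
Definition Gain (a : {ffun N -> option V}) := \sum_k G a k.
Definition sub (a a' : {ffun N -> option V}) := forall k v, a k = Some v -> a' k = Some v.

Lemma ind_ge0 (b : bool) : 0 <= (if b then phi else 0).
Proof. by case: b; rewrite ?lexx ?ltW. Qed.

Lemma G_ge0 a k : 0 <= G a k.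
Proof.
rewrite /G; case: (a k) => // v; apply: addr_ge0; first by rewrite ler0n.
by apply: sumr_ge0 => j _; case: (a j) => // w; exact: ind_ge0.
Qed.

Lemma G_mono a a' k : sub a a' -> G a k <= G a' k.
Proof.
move=> h; rewrite {1}/G; case hk: (a k) => [v|]; last exact: G_ge0.
rewrite /G (h k v hk); apply: lerD => //; apply: ler_sum => j _.
case hj: (a j) => [w|]; first by rewrite (h j w hj).
by case: (a' j) => // *; exact: ind_ge0.
Qed.

Lemma Gain_split a a' : sub a a' ->
  Gain a + \sum_(k | a k == None) G a' k <= Gain a'.
Proof.
move=> h; rewrite /Gain [X in _ <= X](bigID (fun k => a k == None)) /=.
rewrite [\sum_k G a k](bigID (fun k => a k == None)) /=.
rewrite [\sum_(k | a k == None) G a k]big1 ?add0r; last by move=> k /eqP hk; rewrite /G hk.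
by rewrite addrC; apply: lerD => //; apply: ler_sum => k _; exact: G_mono.
Qed.

Lemma Gain_ext a A : ext a A -> Gain a <= SW E u F phi A.
Proof.
move=> h; rewrite /Gain /SW; apply: ler_sum => k _; rewrite /utility /G.
case hk: (a k) => [v|].
  rewrite (h k v hk); apply: lerD => //; rewrite big_mkcondr /=; apply: ler_sum => j _.
  case hj: (a j) => [w|]; first by rewrite (h j w hj).
  by case: E => //; exact: ltW.
by apply: addr_ge0; [rewrite ler0n | apply: sumr_ge0 => *; exact: ltW].
Qed.

Lemma G_pair (a2 : {ffun N -> option V}) a b x y : F a b -> a2 a = Some x ->
  a2 b = Some y -> G a2 a = (u a x)%:R + (if E x y then phi else 0).
Proof.
move=> hab ha hb; rewrite /G ha; congr (_ + _).
by rewrite (big_pred1 b) ?hb // => j; rewrite /= (partner hab).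
Qed.

Lemma G_single (a1 : {ffun N -> option V}) i x : a1 i = Some x -> (u i x)%:R <= G a1 i.
Proof.
move=> h; rewrite /G h lerDl; apply: sumr_ge0 => j _.
by case: (a1 j) => // w; exact: ind_ge0.
Qed.

Definition cntP (s : st) (A : {ffun N -> V}) k :=
  (alloc s k == None) && fr s (A k) && u k (A k).
Definition cnt (s : st) A := #|[set k | cntP s A k]|.
Definition Ucap (s : st) := \max_(A : {ffun N -> V} | injectiveb A) cnt s A.

Lemma leq_cardU (T : finType) (A B : {set T}) : (#|A :|: B| <= #|A| + #|B|)%N.
Proof. by have := cardsUI A B; lia. Qed.

Lemma U_drop (s s' : st) (X : {set N}) (W : {set V}) m :
  (forall k, k \notin X -> alloc s' k = alloc s k) ->
  (forall v, v \notin W -> fr s v -> fr s' v) ->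
  (forall A : {ffun N -> V}, injective A ->
     (#|[set k in X | cntP s A k && (A k \notin W)]| <= m)%N) ->
  (Ucap s <= Ucap s' + m + #|W|)%N.
Proof.
move=> hX hW hm; apply/bigmax_leqP => A /injectiveP hA.
have h1 : (cnt s' A <= Ucap s')%N by apply: leq_bigmax_cond; apply/injectiveP.
set Xb := [set k in X | cntP s A k && (A k \notin W)].
have h2 : (#|A @^-1: W| <= #|W|)%N.
  rewrite -(card_imset _ hA); apply: subset_leq_card; apply/subsetP => v.
  by case/imsetP => k; rewrite inE => hk ->.
have h3 : (cnt s A <= #|[set k | cntP s' A k] :|: Xb :|: A @^-1: W|)%N.
  apply: subset_leq_card; apply/subsetP => k; rewrite inE => hk; rewrite /Xb !inE.
  case: (boolP (A k \in W)) => hw; first by rewrite orbT.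
  case: (boolP (k \in X)) => hkx; first by rewrite hk /= orbT.
  move: hk; rewrite /cntP (hX k hkx) => /andP[/andP[-> hf] ->].
  by rewrite (hW _ hw hf).
have h4 := leq_cardU ([set k | cntP s' A k] :|: Xb) (A @^-1: W).
have h5 := leq_cardU [set k | cntP s' A k] Xb.
have h6 : (#|Xb| <= m)%N := hm A hA.
clearbody Xb; rewrite /cnt in h1 h3 *; lia.
Qed.

Definition mset (s : st) (M : {set {set V}}) :=
  [forall e in M, exists v, exists w, [&& v != w, E v w, fr s v, fr s w & e == [set v; w]]]
  && [forall e1 in M, forall e2 in M, (e1 != e2) ==> [disjoint e1 & e2]].
Definition nu (s : st) := \max_(M : {set {set V}} | mset s M) #|M|.
Definition hasnb (s : st) z := [exists w, [&& w != z, E z w & fr s w]].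

Lemma mset_edge s M e : mset s M -> e \in M ->
  exists v w, [/\ v != w, E v w, fr s v, fr s w & e = [set v; w]].
Proof.
case/andP => /forall_inP h _ /h /existsP[v /existsP[w /and5P[h1 h2 h3 h4 /eqP h5]]].
by exists v, w.
Qed.

Lemma mset_disj s M e1 e2 z : mset s M -> e1 \in M -> e2 \in M ->
  z \in e1 -> z \in e2 -> e1 = e2.
Proof.
case/andP => _ /forall_inP h h1 h2 z1 z2; apply/eqP; apply/negPn/negP => ne.
have := h e1 h1 => /forall_inP /(_ e2 h2); rewrite ne /= => /disjointFr /(_ z1).
by rewrite z2.
Qed.

Lemma nu_drop (s s' : st) x y :
  (forall w, fr s' w = fr s w && (w != x) && (w != y)) ->
  (nu s <= nu s' + hasnb s x + hasnb s y)%N.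
Proof.
move=> hf; apply/bigmax_leqP => M hM.
set M' := [set e in M | (x \notin e) && (y \notin e)].
have hM' : mset s' M'.
  apply/andP; split.
    apply/forall_inP => e; rewrite inE => /andP[he /andP[hx hy]].
    have [v [w [h1 h2 h3 h4 ev]]] := mset_edge hM he; subst e.
    apply/existsP; exists v; apply/existsP; exists w.
    move: hx hy; rewrite !inE !negb_or => /andP[hxv hxw] /andP[hyv hyw].
    by rewrite h1 h2 !hf h3 h4 /= ![v == _]eq_sym ![w == _]eq_sym hxv hxw hyv hyw eqxx.
  apply/forall_inP => e1; rewrite inE => /andP[h1 _].
  apply/forall_inP => e2; rewrite inE => /andP[h2 _].
  by move: hM => /andP[_ /forall_inP/(_ e1 h1)/forall_inP/(_ e2 h2)].
have c1 : (#|M| <= #|M'| + #|[set e in M | x \in e]| + #|[set e in M | y \in e]|)%N.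
  apply: leq_trans (_ : _ <= #|M' :|: [set e in M | x \in e] :|: [set e in M | y \in e]|)%N _.
    apply: subset_leq_card; apply/subsetP => e he; rewrite !inE he /=.
    by case: (x \in e); case: (y \in e).
  by apply: leq_trans (leq_cardU _ _) _; rewrite leq_add2r; exact: leq_cardU.
have c2 z : (#|[set e in M | z \in e]| <= hasnb s z)%N.
  case: (boolP (hasnb s z)) => hz.
    apply/card_le1_eqP => e1 e2; rewrite !inE => /andP[h1 z1] /andP[h2 z2].
    exact: mset_disj hM h2 h1 z2 z1.
  rewrite leqn0 cards_eq0; apply/eqP/setP => e; rewrite !inE.
  apply/negbTE/negP => /andP[he hze]; apply: (negP hz).
  have [v [w [h1 h2 h3 h4 ev]]] := mset_edge hM he; subst e.
  move: hze; rewrite !inE => /orP[]/eqP->; apply/existsP.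
    by exists w; rewrite eq_sym h1 h2 h4.
  by exists v; rewrite h1 hEsym h2 h3.
have c3 : (#|M'| <= nu s')%N by apply: leq_bigmax_cond.
apply: leq_trans c1 _; rewrite -!addnA; apply: leq_add => //.
by apply: leq_add; apply: c2.
Qed.

Definition Fr (s : st) := minn #|pairs s| (nu s).

Lemma nu0 (s : st) : ~~ [exists v, exists w, [&& v != w, E v w, fr s v & fr s w]] ->
  nu s = 0%N.
Proof.
move=> h; apply/eqP; rewrite -leqn0; apply/bigmax_leqP => M hM.
rewrite leqn0 cards_eq0; apply/eqP/setP => e; rewrite inE.
apply/negbTE/negP => he; apply: (negP h).
have [v [w [h1 h2 h3 h4 _]]] := mset_edge hM he.
by apply/existsP; exists v; apply/existsP; exists w; rewrite h1 h2 h3 h4.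
Qed.

Lemma Fr0 (s : st) : ~~ ff_cond E s -> Fr s = 0%N.
Proof.
rewrite /ff_cond negb_and negbK => /orP[/eqP e|h].
  by rewrite /Fr e cards0 min0n.
by rewrite /Fr (nu0 h) minn0.
Qed.



Definition ind (c : bool) : R := if c then phi else 0.

Lemma ind_ge0' c : 0 <= ind c. Proof. exact: ind_ge0. Qed.
Lemma indT : ind true = phi. Proof. by []. Qed.
Lemma indF : ind false = 0. Proof. by []. Qed.
Ltac plra := rewrite ?indT ?indF; have := hphi0; have := hphi1; lra.


Lemma b2R (c : bool) : ((c : nat)%:R : R) = if c then 1 else 0.
Proof. by case: c. Qed.

Lemma ind_le (c : bool) : ind c <= phi.
Proof. by rewrite /ind; case: c => //; exact: ltW. Qed.

Lemma comb (f : V -> bool) a b (x : V) (y : V -> V) v0 w0 :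
  f x -> (forall v, f v -> f (y v) && (y v != v)) ->
  (forall v w, f v -> f w -> w != v ->
     (u b w)%:R + ind (E w v) <= (u b (y v))%:R + ind (E (y v) v)) ->
  (forall v, f v -> (u a v)%:R + ind (E v (y v)) <= (u a x)%:R + ind (E x (y x))) ->
  v0 != w0 -> E v0 w0 -> f v0 -> f w0 ->
  [/\ ((exists2 v, f v & u a v) -> u a x) &
      (phi <= (u a x)%:R + (u b (y x))%:R + ind (E x (y x)) + ind (E (y x) x) \/
       [/\ (forall v, f v -> ~~ u a v), u b x, (forall w, f w -> u b w -> w = x)
         & (forall w, f w -> w != x -> ~~ E x w)])].
Proof.
move=> fx hy hBR hA hv0w0 hE0 fv0 fw0.
have C1 : (exists2 v, f v & u a v) -> u a x.
  case=> v fv uav; apply/negPn/negP => /negbTE uax.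
  have := hA v fv; rewrite uav uax !b2R.
  by have := ind_le (E x (y x)); have := ind_ge0' (E v (y v)); plra.
split => //.
have g0 : 0 <= ((u a x)%:R : R) by rewrite ler0n.
have g1 : 0 <= ((u b (y x))%:R : R) by rewrite ler0n.
have g2 := ind_ge0' (E x (y x)); have g3 := ind_ge0' (E (y x) x).
case: (boolP [exists v, f v && u a v]) => [/existsP[v /andP[fv uav]]|na].
  left; have ux := C1 (ex_intro2 _ _ v fv uav); move: g0; rewrite ux b2R => g0.
  by move: g1 g2 g3; plra.
have na' : forall v, f v -> ~~ u a v.
  by move=> v fv; apply/negP => uav; apply: (negP na); apply/existsP; exists v; rewrite fv uav.
case: (boolP [exists w, [&& f w, w != x & u b w]]) => [/existsP[w /and3P[fw wx ubw]]|nb1].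
  left; have := hBR x w fx fw wx; rewrite ubw b2R.
  by have := ind_ge0' (E w x); move: g0 g2; plra.
case: (boolP [exists w, [&& f w, w != x & E x w]]) => [/existsP[w /and3P[fw wx exw]]|nx].
  left; have := hBR x w fx fw wx; rewrite (hEsym w x) exw.
  have g4 : 0 <= ((u b w)%:R : R) by rewrite ler0n.
  by move: g0 g2 g4; plra.
case: (boolP (u b x)) => ubx.
  right; split => //.
    move=> w fw hw; apply/eqP/negPn/negP => wx.
    by apply: (negP nb1); apply/existsP; exists w; rewrite fw wx hw.
  move=> w fw wx; apply/negP => hw.
  by apply: (negP nx); apply/existsP; exists w; rewrite fw wx hw.
left.
have nbw : forall w, f w -> ~~ u b w.
  move=> w fw; case: (eqVneq w x) => [->//|wx].
  by apply/negP => hw; apply: (negP nb1); apply/existsP; exists w; rewrite fw wx hw.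
have /andP[fy0 _] := hy v0 fv0.
have := hBR v0 w0 fv0 fw0; rewrite eq_sym hv0w0 => /(_ isT).
rewrite (negbTE (nbw _ fw0)) (negbTE (nbw _ fy0)) (hEsym w0 v0) hE0 !b2R.
case e1: (E (y v0) v0); last by plra.
move=> _; have := hA v0 fv0; rewrite (negbTE (na' _ fv0)) (negbTE (na' _ fx)) hEsym e1 !b2R.
case: (E x (y x)); last by plra.
by move: g3; case: (u b (y x)); plra.
Qed.

Lemma order (s : st) p a b : GInv s -> cur s = None -> ff_cond E s ->
  p \in pairs s -> p = [set a; b] -> F a b ->
  exists (s2 : st) (x y : V),
  [/\ (GInv s2 /\ cur s2 = None),
      (forall k (g : {ffun N -> V} -> R), ev k.+2 (draw_step s p a) g = ev k s2 g),
      (#|[set k | alloc s2 k == None]|.+2 <= #|[set k | alloc s k == None]|)%N,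
      Gain (alloc s) + ((u a x)%:R + (u b y)%:R + ind (E x y) + ind (E y x)) <= Gain (alloc s2) &
      [/\ ((Ucap s <= Ucap s2 + 4)%N /\ (Fr s <= Fr s2 + 2)%N),
      ((forall w, fr s w -> u a w -> w = x) -> (forall w, fr s w -> u b w -> w = x) ->
        (forall w, fr s w -> w != x -> ~~ E x w) ->
        (Ucap s <= Ucap s2 + 2)%N /\ (Fr s <= Fr s2 + 1)%N) &
      [/\ fr s x, ((exists2 v, fr s v & u a v) -> u a x) &
        (phi <= (u a x)%:R + (u b y)%:R + ind (E x y) + ind (E y x) \/
         [/\ (forall v, fr s v -> ~~ u a v), u b x, (forall w, fr s w -> u b w -> w = x)
           & (forall w, fr s w -> w != x -> ~~ E x w)])]]].
Proof.
move=> hI hc hff hp hpe hab.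
have ab := F_neq hab.
have ba : b != a by rewrite eq_sym.
have hba : F b a by rewrite hFsym.
have hok : pairs_ok s.
  by case: hI => _ _ _ _ [] //; move: hff => /andP[_ hex]; rewrite /noFA hex.
have ap : a \in p by rewrite hpe !inE eqxx.
have bp : b \in p by rewrite hpe !inE eqxx orbT.
have [ha0 _ _] := hok p hp a ap.
have [hb0 _ _] := hok p hp b bp.
set d := draw_step s p a.
have cd : cur d = Some a by [].
have nd : nxt d = Some b by rewrite /= hpe pick_pair.
have hId : GInv d := GInv_draw hI hc hff hp ap.
pose yf := fun v => strat (pick_step d v).
have hs1 : forall v, fr s v -> [/\ GInv (pick_step d v), cur (pick_step d v) = Some b,
    alloc (pick_step d v) a = Some v, alloc (pick_step d v) b = None
  & forall w, fr (pick_step d v) w = fr s w && (w != v)].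
  move=> v fv; split.
  - exact: GInv_pick hId cd fv.
  - exact: nd.
  - by rewrite (alloc_pick _ _ cd) eqxx.
  - by rewrite (alloc_pick _ _ cd) (negbTE ba).
  - by move=> w; rewrite (free_pick _ _ cd ha0).
have hy : forall v, fr s v -> fr s (yf v) && (yf v != v).
  by move=> v fv; have [h1 h2 _ _ h5] := hs1 v fv; rewrite -h5; apply: strat_free h1 h2.
have hBR : forall v w, fr s v -> fr s w -> w != v ->
    (u b w)%:R + ind (E w v) <= (u b (yf v))%:R + ind (E (yf v) v).
  move=> v w fv fw wv; have [h1 h2 h3 h4 h5] := hs1 v fv.
  have fw1 : fr (pick_step d v) w by rewrite h5 fw wv.
  have fy1 : fr (pick_step d v) (yf v) := strat_free h1 h2.
  have [_ hh] := hstrat (GInv_wf h1) h2 (free_exists h1 h2).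
  have := hh w fw1; rewrite /expect /fuel.
  by rewrite (second_val _ h1 h2 h3 hba fw1) (second_val _ h1 h2 h3 hba fy1).
have hA : forall v, fr s v -> (u a v)%:R + ind (E v (yf v)) <=
    (u a (strat d))%:R + ind (E (strat d) (yf (strat d))).
  move=> v fv; have [_ hh] := hstrat (GInv_wf hId) cd (free_exists hId cd).
  have := hh v fv; rewrite /expect /fuel.
  by rewrite (first_val _ hId cd nd hab fv) (first_val _ hId cd nd hab (strat_free hId cd)).
have [v0 [w0 [h01 h02 h03 h04]]] : exists v0 w0, [/\ v0 != w0, E v0 w0, fr s v0 & fr s w0].
  by move: hff => /andP[_ /existsP[v0 /existsP[w0 /and4P[? ? ? ?]]]]; exists v0, w0.
set x := strat d.
have fx : fr s x := strat_free hId cd.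
have [C1 C2] := comb fx hy hBR hA h01 h02 h03 h04.
have [hI1 c1 a1 b1 f1] := hs1 x fx.
set s1 := pick_step d x in hI1 c1 a1 b1 f1.
set y := strat s1.
have fy1 : fr s1 y := strat_free hI1 c1.
set s2 := pick_step s1 y.
have hI2 : GInv s2 := GInv_pick hI1 c1 fy1.
have a2 : forall k, alloc s2 k = if k == b then Some y else if k == a then Some x else alloc s k.
  by move=> k; rewrite (alloc_pick _ _ c1) (alloc_pick _ _ cd).
have f2 : forall w, fr s2 w = fr s w && (w != x) && (w != y).
  by move=> w; rewrite (free_pick _ _ c1 b1) f1.
have Ud : forall m, (forall A : {ffun N -> V}, injective A ->
    (#|[set k in [set a; b] | cntP s A k && (A k \notin [set x; y])]| <= m)%N) ->
    (Ucap s <= Ucap s2 + m + 2)%N.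
  move=> m hm; apply: leq_trans (U_drop (s' := s2) _ _ hm) _.
  - by move=> k; rewrite !inE negb_or => /andP[ka kb]; rewrite a2 (negbTE ka) (negbTE kb).
  - by move=> v; rewrite !inE negb_or => /andP[vx vy] fv; rewrite f2 fv vx vy.
  - by rewrite leq_add2l cards2; case: (x != y).
have Nd : (nu s <= nu s2 + hasnb s x + hasnb s y)%N := nu_drop f2.
have Pd : #|pairs s| = (#|pairs s2|).+1 by rewrite (cardsD1 p (pairs s)) hp.
have hx1 := leq_b1 (hasnb s x); have hy1 := leq_b1 (hasnb s y).
exists s2, x, y; split.
- by split.
- by move=> k g; rewrite (ev_cur _ _ cd) (ev_cur _ _ c1).
- pose S := [set k | alloc s k == None].
  have sub2 : [set k | alloc s2 k == None] \subset S :\ a :\ b.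
    apply/subsetP => k; rewrite !inE a2.
    by case: (eqVneq k b) => //= kb; case: (eqVneq k a) => //= ka; rewrite kb ka.
  have e1 : #|S| = (#|S :\ a :\ b|).+2.
    by rewrite (cardsD1 a S) (cardsD1 b (S :\ a)) !inE ha0 hb0 eqxx ba.
  by rewrite -/S e1 ltnS; exact: subset_leq_card sub2.
- have hsub : sub (alloc s) (alloc s2).
    move=> k v hk; rewrite a2; case: (eqVneq k b) => kb; first by subst; rewrite hb0 in hk.
    by case: (eqVneq k a) => ka //; subst; rewrite ha0 in hk.
  apply: le_trans (Gain_split hsub); rewrite lerD2l.
  rewrite (bigD1 a) /=; last by rewrite ha0.
  rewrite (bigD1 b) /=; last by rewrite hb0 ba.
  have ea : alloc s2 a = Some x by rewrite a2 (negbTE ab) eqxx.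
  have eb : alloc s2 b = Some y by rewrite a2 eqxx.
  rewrite (G_pair hab ea eb) (G_pair hba eb ea).
  have hr : 0 <= \sum_(i | (alloc s i == None) && (i != a) && (i != b)) G (alloc s2) i.
    by apply: sumr_ge0 => *; exact: G_ge0.
  by move: hr; rewrite /ind; lra.
split.
- have hm2 : forall A : {ffun N -> V}, injective A ->
    (#|[set k in [set a; b] | cntP s A k && (A k \notin [set x; y])]| <= 2)%N.
    move=> A _; apply: leq_trans (_ : _ <= #|[set a; b]|)%N _.
      by apply: subset_leq_card; apply/subsetP => k; rewrite inE => /andP[].
    by rewrite cards2 ab.
  have hU := Ud 2%N hm2.
  split; first by rewrite -addnA (_ : (2 + 2 = 4)%N) // in hU.
  
  rewrite /Fr Pd. exact: fr_gen Nd hx1 hy1.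
- move=> ha hb hn; split.
    have hm0 : forall A : {ffun N -> V}, injective A ->
      (#|[set k in [set a; b] | cntP s A k && (A k \notin [set x; y])]| <= 0)%N.
    move=> A _; rewrite leqn0 cards_eq0; apply/eqP/setP => k.
    rewrite in_set0 inE; apply/negbTE/negP => /andP[hk /andP[hcc hw]].
    move: hw; rewrite !inE negb_or => /andP[hwx _].
    move: hcc; rewrite /cntP => /andP[/andP[_ hf] hu].
    move: hk; rewrite !inE => /orP[] /eqP ek; subst k.
      by rewrite (ha _ hf hu) eqxx in hwx.
    by rewrite (hb _ hf hu) eqxx in hwx.
    by have := Ud 0%N hm0; rewrite addn0.
  have hx0 : hasnb s x = false.
    apply/negbTE/existsP => -[w /and3P[wx exw fw]].
    by have := hn w fw wx; rewrite exw.
  rewrite /Fr Pd; rewrite hx0 in Nd; exact: fr_ref Nd hy1.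
- by split; [exact: fx | exact: C1 | exact: C2].
Qed.

Definition c0 : R := phi / (4 * phi + 4).
Definition Q (s : st) : R := (Ucap s)%:R + 2 * phi * (Fr s)%:R.
Definition Phi (s : st) : R := Gain (alloc s) + c0 * Q s.

Lemma c0_ge0 : 0 <= c0.
Proof. by rewrite /c0 divr_ge0 //; have := hphi0; lra. Qed.

Lemma c0_gen : c0 * ((4%N)%:R + 2 * phi * (2%N)%:R) = phi.
Proof. rewrite /c0; field; have := hphi0; lra. Qed.

Lemma c0_ref : c0 * ((2%N)%:R + 2 * phi * (1%N)%:R) = phi / 2.
Proof. rewrite /c0; field; have := hphi0; lra. Qed.

Lemma c0_rsd : c0 * (2%N)%:R <= 1.
Proof.
rewrite /c0 mulrAC ler_pdivrMr; first by have := hphi0; have := hphi1; lra.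
by have := hphi0; lra.
Qed.

Lemma Q_drop (s s2 : st) (dU dF : nat) : (Ucap s <= Ucap s2 + dU)%N ->
  (Fr s <= Fr s2 + dF)%N -> c0 * Q s <= c0 * Q s2 + c0 * (dU%:R + 2 * phi * dF%:R).
Proof.
move=> h1 h2; rewrite -mulrDr; apply: ler_wpM2l; first exact: c0_ge0.
have h1' : ((Ucap s)%:R : R) <= (Ucap s2)%:R + dU%:R by rewrite -natrD ler_nat.
have h2' : ((Fr s)%:R : R) <= (Fr s2)%:R + dF%:R by rewrite -natrD ler_nat.
have h3 : 2 * phi * (Fr s)%:R <= 2 * phi * ((Fr s2)%:R + dF%:R).
  by apply: ler_wpM2l => //; have := hphi0; lra.
by rewrite /Q; move: h1' h3; rewrite mulrDr; lra.
Qed.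

Lemma gain_ge0 a b x y : 0 <= (u a x)%:R + (u b y)%:R + ind (E x y) + ind (E y x).
Proof.
by rewrite !addr_ge0 ?ler0n ?ind_ge0'.
Qed.

Lemma pair_step (s : st) p a b (k : nat) : GInv s -> cur s = None -> ff_cond E s ->
  p \in pairs s -> p = [set a; b] -> F a b ->
  (forall s2 : st, GInv s2 -> cur s2 = None ->
     (#|[set i | alloc s2 i == None]|.+2 <= #|[set i | alloc s i == None]|)%N ->
     Phi s2 <= ev k s2 (SW E u F phi)) ->
  Phi s <= (#|p|%:R)^-1 * \sum_(i in p) ev k.+2 (draw_step s p i) (SW E u F phi).
Proof.
move=> hI hc hff hp hpe hab IH.
have ab := F_neq hab.
have hba : F b a by rewrite hFsym.
have hpe' : p = [set b; a] by rewrite hpe setUC.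
have [s2 [x [y [[hI2 c2] ev2 un2 G2 [[Dg Fg] Dr [fx C1 C2]]]]]] := order hI hc hff hp hpe hab.
have [s3 [x' [y' [[hI3 c3] ev3 un3 G3 [[Dg' Fg'] Dr' [fx' C1' C2']]]]]] :=
  order hI hc hff hp hpe' hba.
have -> : #|p| = 2%N by rewrite hpe cards2 ab.
have hs : forall f : N -> R, \sum_(i in [set a; b]) f i = f a + f b.
  by move=> f; rewrite big_setU1 ?inE //= big_set1.
rewrite {1}hpe hs ev2 ev3.
have P2 := IH s2 hI2 c2 un2.
have P3 := IH s3 hI3 c3 un3.
suff : 2 * Phi s <= Phi s2 + Phi s3.
  by move: P2 P3; set e2 := ev k s2 _; set e3 := ev k s3 _; move=> P2 P3 h;
     rewrite ler_pdivlMl ?ltr0n //; move: P2 P3 h; lra.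
rewrite /Phi.
have gab := gain_ge0 a b x y; have gba := gain_ge0 b a x' y'.
set gA := _ + _ + ind (E x y) + ind (E y x) in G2 gab C2 *.
set gB := _ + _ + ind (E x' y') + ind (E y' x') in G3 gba C2' *.
have hphi := hphi0; have hphi' := hphi1.
case: C2 => [hgA|[na ubx hbx hnx]].
  case: C2' => [hgB|[na' uax' hax' hnx']].
    have d2 := Q_drop Dg Fg; have d3 := Q_drop Dg' Fg'.
    rewrite c0_gen in d2 d3; move: d2 d3 G2 G3; lra.
  have ux : u a x by apply: C1; exists x'.
  have xx : x = x' by apply: hax'.
  subst x'.
  have [d2u d2f] := Dr hax' (fun w fw h => False_ind _ (negP (na' w fw) h)) hnx'.
  have [d3u d3f] := Dr' (fun w fw h => False_ind _ (negP (na' w fw) h)) hax' hnx'.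
  have d2 := Q_drop d2u d2f; have d3 := Q_drop d3u d3f.
  rewrite c0_ref in d2 d3.
  have g1 : 1 <= gA by rewrite /gA ux mulr1n -!addrA lerDl !addr_ge0 ?ler0n ?ind_ge0'.
  by move: d2 d3 G2 G3; lra.
have ux' : u b x' by apply: C1'; exists x.
have xx : x' = x by apply: hbx.
subst x'.
have [d2u d2f] := Dr (fun w fw h => False_ind _ (negP (na w fw) h)) hbx hnx.
have [d3u d3f] := Dr' hbx (fun w fw h => False_ind _ (negP (na w fw) h)) hnx.
have d2 := Q_drop d2u d2f; have d3 := Q_drop d3u d3f.
rewrite c0_ref in d2 d3.
have g1 : 1 <= gB by rewrite /gB ux' mulr1n -!addrA lerDl !addr_ge0 ?ler0n ?ind_ge0'.
by move: d2 d3 G2 G3; lra.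
Qed.

Lemma avg_ge (T : finType) (S : {set T}) (f : T -> R) lo : S != set0 ->
  (forall x, x \in S -> lo <= f x) -> lo <= (#|S|%:R)^-1 * \sum_(x in S) f x.
Proof.
move=> hS h.
have hS' : (#|S|%:R : R) != 0 by rewrite pnatr_eq0 -lt0n card_gt0.
have e : (#|S|%:R)^-1 * \sum_(x in S) lo = lo.
  by rewrite sumr_const -(mulr_natl lo) mulrA mulVf // mul1r.
rewrite -{1}e; apply: ler_wpM2l; first by rewrite invr_ge0 ler0n.
by apply: ler_sum => x hx; exact: h.
Qed.

Lemma U0 (s : st) : rsd_set u s = set0 -> Ucap s = 0%N.
Proof.
move=> h; apply/eqP; rewrite -leqn0; apply/bigmax_leqP => A _.
rewrite leqn0 cards_eq0; apply/eqP/setP => k; rewrite in_set0 inE.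
apply/negbTE/negP => /andP[/andP[hk hf] hu].
have : k \in rsd_set u s by rewrite inE /unplaced hk /=; apply/existsP; exists (A k); rewrite hf hu.
by rewrite h inE.
Qed.

Lemma Fr_allplaced (s : st) : GInv s -> [set i | alloc s i == None] = set0 -> Fr s = 0%N.
Proof.
move=> hI hall; apply: Fr0; case: hI => _ hP _ _ [hn|hok].
  by rewrite /ff_cond negb_and -/(noFA s) hn orbT.
rewrite /ff_cond negb_and negbK; apply/orP; left; apply/eqP/setP => p.
rewrite in_set0; apply/negbTE/negP => hp.
have hp0 : p \in P0 by apply: (subsetP hP).
have [a [b [_ _ e]]] := inP0 hp0.
have ap : a \in p by rewrite e !inE eqxx.
have [h1 _ _] := hok p hp a ap.
have : a \in [set i | alloc s i == None] by rewrite inE h1.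
by rewrite hall inE.
Qed.

Lemma rsd0_allplaced (s : st) : [set i | alloc s i == None] = set0 -> rsd_set u s = set0.
Proof.
move=> h; apply/setP => i; rewrite in_set0 inE; apply/negbTE/negP => /andP[hi _].
have : i \in [set i | alloc s i == None] by rewrite inE.
by rewrite h inE.
Qed.

Lemma Phi_term (s : st) : GInv s -> rsd_set u s = set0 -> Fr s = 0%N ->
  Phi s <= SW E u F phi (compl s).
Proof.
move=> hI hr hF; rewrite /Phi /Q (U0 hr) hF !mulr0 addr0 mulr0 addr0.
have hinj : partial_inj (alloc s) by case: hI.
by have [_ h2] := hcompl hinj; apply: Gain_ext.
Qed.

Lemma util_ge i (A : {ffun N -> V}) : (u i (A i))%:R <= Ut i A.
Proof. by rewrite /utility lerDl; apply: sumr_ge0 => *; exact: ltW. Qed.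

Lemma util_le i (A : {ffun N -> V}) : Ut i A <= (u i (A i))%:R + phi.
Proof.
rewrite /utility lerD2l; apply: (@le_trans _ _ (\sum_(j | F i j) phi)).
  rewrite [X in X <= _]big_mkcondr /=; apply: ler_sum => j _.
  by case: E => //; exact: ltW.
rewrite sumr_const.
have : (#|[pred j | F i j]| <= 1)%N.
  by have := hdeg i; rewrite (eq_card (B := [pred j | F i j])) // => j; rewrite inE.
case: #|_| => [|[|//]] _; first by rewrite mulr0n; exact: ltW.
by rewrite mulr1n.
Qed.

Lemma rsd_step (s : st) i : GInv s -> cur s = None -> ~~ ff_cond E s ->
  i \in rsd_set u s ->
  let t := MkState (alloc s) (pairs s) (Some i) None in
  let s3 := pick_step t (strat t) in
  [/\ GInv s3, cur s3 = None,
      (#|[set k | alloc s3 k == None]|.+1 <= #|[set k | alloc s k == None]|)%N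
    & Phi s <= Phi s3].
Proof.
move=> hI hc hff hi t s3.
have hIt : GInv t := GInv_rsd hI hc hff hi.
have ct : cur t = Some i by [].
have hi0 : alloc s i = None by move: hi; rewrite inE => /andP[/eqP].
set x := strat t in s3 *.
have fx : fr s x := strat_free hIt ct.
have hI3 : GInv s3 := GInv_pick hIt ct fx.
have a3 : forall k, alloc s3 k = if k == i then Some x else alloc s k.
  by move=> k; rewrite (alloc_pick _ _ ct).
have f3 : forall w, fr s3 w = fr s w && (w != x).
  by move=> w; rewrite (free_pick _ _ ct hi0).
have uix : u i x.
  move: hi; rewrite inE => /andP[_ /existsP[v /andP[fv uiv]]].
  have [_ hh] := hstrat (GInv_wf hIt) ct (free_exists hIt ct).
  have := hh v fv; rewrite /expect /fuel.
  have /andP[l1 _] : 1 <= ev (3 * #|N|).+1 (pick_step t v) (Ut i) <= 1 + phi.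
    apply: evB; first exact: GInv_pick hIt ct fv.
    move=> A _ hext; have hA : A i = v by apply: hext; rewrite (alloc_pick _ _ ct) eqxx.
    have := util_ge i A; have := util_le i A; rewrite hA uiv mulr1n => h1 h2.
    by rewrite h2 h1.
  have /andP[_ l2] : 0 <= ev (3 * #|N|).+1 (pick_step t x) (Ut i) <= (u i x)%:R + phi.
    apply: evB; first exact: hI3.
    move=> A _ hext; have hA : A i = x by apply: hext; rewrite (alloc_pick _ _ ct) eqxx.
    have := util_ge i A; have := util_le i A; rewrite hA => h1 h2.
    by rewrite h1 (le_trans _ h2) ?ler0n.
  move=> h; apply/negPn/negP => /negbTE ux; move: l2; rewrite ux mulr0n.
  by move: l1 h; have := hphi1; lra.
split => //.
- pose S := [set k | alloc s k == None].
  have sub3 : [set k | alloc s3 k == None] \subset S :\ i.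
    by apply/subsetP => k; rewrite !inE a3; case: (eqVneq k i).
  have e1 : #|S| = (#|S :\ i|).+1 by rewrite (cardsD1 i S) !inE hi0.
  by rewrite -/S e1 ltnS; exact: subset_leq_card sub3.
- have hsub : sub (alloc s) (alloc s3).
    by move=> k v hk; rewrite a3; case: (eqVneq k i) => // e; subst; rewrite hi0 in hk.
  have hG := Gain_split hsub.
  have hGi : 1 <= \sum_(k | alloc s k == None) G (alloc s3) k.
    rewrite (bigD1 i) /=; last by rewrite hi0.
    have hx3 : alloc s3 i = Some x by rewrite a3 eqxx.
    have := G_single hx3; rewrite uix mulr1n => h1.
    have h2 : 0 <= \sum_(k | (alloc s k == None) && (k != i)) G (alloc s3) k.
      by apply: sumr_ge0 => *; exact: G_ge0.
    by move: h1 h2; lra.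
  have hU : (Ucap s <= Ucap s3 + 1 + #|[set x]|)%N.
    apply: (U_drop (X := [set i])).
    - by move=> k; rewrite inE => ki; rewrite a3 (negbTE ki).
    - by move=> v; rewrite inE => vx fv; rewrite f3 fv vx.
    - move=> A _; apply: leq_trans (_ : _ <= #|[set i]|)%N _; last by rewrite cards1.
      by apply: subset_leq_card; apply/subsetP => k; rewrite inE => /andP[].
  rewrite cards1 -addnA (_ : (1 + 1 = 2)%N) // in hU.
  have d := Q_drop (dF := 0%N) hU (_ : (Fr s <= Fr s3 + 0)%N).
  have := d; rewrite /Phi (Fr0 hff) addn0 => /(_ (leq0n _)) {}d.
  rewrite mulr0 addr0 in d.
  have hc2 := c0_rsd.
  by move: hG hGi d hc2; rewrite /Phi; lra.
Qed.

Lemma Pot_base (s : st) : GInv s -> (2 * #|[set i | alloc s i == None]| <= 0)%N ->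
  Phi s <= ev 0 s (SW E u F phi).
Proof.
move=> hI hm.
have hall : [set i | alloc s i == None] = set0.
  by apply/eqP; rewrite -cards_eq0; move: hm; move: (#|_|) => n; lia.
exact: Phi_term hI (rsd0_allplaced hall) (Fr_allplaced hI hall).
Qed.

Lemma Pot (K : nat) : forall (m : nat) (s : st), (m <= K)%N -> GInv s -> cur s = None ->
  (2 * #|[set i | alloc s i == None]| <= m)%N -> Phi s <= ev m s (SW E u F phi).
Proof.
elim: K => [|K IH] m s hmK hI hc hm.
  have m0 : m = 0%N by move: hmK; lia.
  by subst m; exact: Pot_base.
case: m hmK hm => [|m'] hmK hm; first exact: Pot_base.
rewrite /= hc; case hff: (ff_cond E s).
  apply: avg_ge; first by case/andP: hff.
  move=> p hp; have hp0 : p \in P0 by case: hI => _ hP _ _ _; apply: (subsetP hP).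
  have [a [b [hab ab hpe]]] := inP0 hp0.
  have hok : pairs_ok s.
    by case: hI => _ _ _ _ [] //; move: hff => /andP[_ hex]; rewrite /noFA hex.
  have ap : a \in p by rewrite hpe !inE eqxx.
  have bp : b \in p by rewrite hpe !inE eqxx orbT.
  have [ha _ _] := hok p hp a ap; have [hb _ _] := hok p hp b bp.
  have h2 : (2 <= #|[set i | alloc s i == None]|)%N.
    have -> : 2%N = #|[set a; b]| by rewrite cards2 ab.
    by apply: subset_leq_card; apply/subsetP => i; rewrite !inE => /orP[]/eqP->; rewrite ?ha ?hb.
  move: hm h2; set n := #|_| => hm h2.
  case: m' hmK hm => [|[|k]] hmK hm; try by move: hm h2; lia.
  apply: (pair_step hI hc hff hp hpe hab) => s2 hI2 c2 hun.
  apply: IH => //; first by move: hmK; lia.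
  by move: hun hm; move: (#|[set i | alloc s2 i == None]|) => n2; lia.
case: ifP => hr.
  exact: Phi_term hI (eqP hr) (Fr0 (negbT hff)).
apply: avg_ge; first by rewrite hr.
move=> i hi.
have [hI3 c3 hun hPhi] := rsd_step hI hc (negbT hff) hi.
have h1 : (1 <= #|[set k | alloc s k == None]|)%N.
  by apply/card_gt0P; exists i; move: hi; rewrite !inE => /andP[].
move: hm h1 hun; set n := #|[set k | alloc s k == None]| => hm h1 hun.
case: m' hmK hm => [|k] hmK hm; first by move: hm h1; lia.
rewrite (@ev_cur k (MkState (alloc s) (pairs s) (Some i) None) _ i erefl).
apply: le_trans hPhi _.
apply: IH => //; first by move: hmK; lia.
by move: hun hm; move: (#|[set k | alloc _ k == None]|) => n2; lia.
Qed.

Lemma half_bound (lt : rel N) (A : {ffun N -> V}) : injective A ->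
  (forall a b, lt a b -> ~~ lt b a) ->
  (#|[set x : N * N | F x.1 x.2 && E (A x.1) (A x.2) && lt x.1 x.2]|
     <= minn #|P0| (nu (init_state V F)))%N.
Proof.
move=> hA hlt.
set O1 := [set x : N * N | _].
pose f := fun x : N * N => [set x.1; x.2].
have fP0 : forall x, x \in O1 -> f x \in P0.
  move=> x; rewrite inE => /andP[/andP[hx _] _].
  by apply/imsetP; exists x; rewrite ?inE.
have finj : {in O1 &, injective f}.
  move=> [a b] [c d]; rewrite !inE /= => /andP[/andP[hab _] lab] /andP[/andP[hcd _] lcd] e.
  have : a \in [set c; d] by rewrite -[[set c; d]]/(f (c, d)) -e !inE eqxx.
  have : b \in [set c; d] by rewrite -[[set c; d]]/(f (c, d)) -e !inE eqxx orbT.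
  rewrite !inE => /orP[]/eqP hb /orP[]/eqP ha; subst.
  - by rewrite hFirr in hab.
  - by move: (hlt _ _ lab); rewrite lcd.
  - by [].
  - by rewrite hFirr in hab.
pose g := fun x : N * N => [set A y | y in f x].
have ginj : {in O1 &, injective g}.
  by move=> x y hx hy e; apply: finj => //; apply: (imset_inj hA).
rewrite leq_min; apply/andP; split.
  rewrite -(card_in_imset finj); apply: subset_leq_card; apply/subsetP => e.
  by case/imsetP => x hx ->; exact: fP0.
rewrite -(card_in_imset ginj); apply: leq_bigmax_cond; apply/andP; split.
  apply/forall_inP => e /imsetP[[a b] hx ->].
  move: (hx); rewrite inE /= => /andP[/andP[hab hE] _].
  apply/existsP; exists (A a); apply/existsP; exists (A b).
  have ab := F_neq hab.
  rewrite (inj_eq hA) ab hE /=.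
  have hfr : forall v, fr (init_state V F) v.
    by move=> v; apply/forallP => k; rewrite /= ffunE.
  by rewrite !hfr /g /f /= imsetU1 imset_set1.
apply/forall_inP => e1 /imsetP[x hx ->]; apply/forall_inP => e2 /imsetP[y hy ->].
apply/implyP => ne; rewrite -setI_eq0; apply/eqP/setP => z; rewrite in_set0 inE.
apply/negbTE/negP => /andP[/imsetP[k1 k1x ->] /imsetP[k2 k2y e12]].
have e := hA _ _ e12; subst k2.
have := P0_disj (fP0 _ hx) (fP0 _ hy) k1x k2y => hfe.
by move: ne; rewrite /g hfe eqxx.
Qed.

Lemma OPT_le : OPT E u F phi <= Q (init_state V F).
Proof.
have hQ : 0 <= Q (init_state V F).
  by rewrite /Q addr_ge0 ?ler0n // mulr_ge0 ?ler0n // mulr_ge0 //; have := hphi0; lra.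
rewrite /OPT; apply: bigmax_le => // A /injectiveP hA.
rewrite /SW /utility big_split /= sum_bool.
have hc : (#|[set i | u i (A i)]| <= Ucap (init_state V F))%N.
  apply: leq_trans (leq_bigmax_cond A _); last by apply/injectiveP.
  rewrite /cnt; apply: subset_leq_card; apply/subsetP => k; rewrite !inE => hk.
  rewrite /cntP /= ffunE eqxx hk andbT /=.
  by apply/forallP => j; rewrite ffunE.
rewrite (pair_big_dep xpredT (fun i j => F i j && E (A i) (A j)) (fun _ _ => phi)) /=.
rewrite sumr_const.
pose lt1 := fun a b : N => (enum_rank a < enum_rank b)%N.
pose lt2 := fun a b : N => (enum_rank b < enum_rank a)%N.
have a1 : forall a b, lt1 a b -> ~~ lt1 b a by move=> a b; rewrite /lt1 -leqNgt; exact: ltnW.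
have a2 : forall a b, lt2 a b -> ~~ lt2 b a by move=> a b; rewrite /lt2 -leqNgt; exact: ltnW.
have h1 := half_bound hA a1; have h2 := half_bound hA a2.
have hO : (#|(fun i : N * N => F i.1 i.2 && E (A i.1) (A i.2))| <= 2 * Fr (init_state V F))%N.
  set O1 := [set x : N * N | _ && lt1 x.1 x.2] in h1.
  set O2 := [set x : N * N | _ && lt2 x.1 x.2] in h2.
  apply: leq_trans (_ : _ <= #|O1 :|: O2|)%N _.
    apply: subset_leq_card; apply/subsetP => x hx0.
    have hx : F x.1 x.2 && E (A x.1) (A x.2) := hx0.
    rewrite in_setU /O1 /O2 !inE hx /= /lt1 /lt2.
    have : x.1 != x.2 by case/andP: hx => hx1 _; exact: F_neq.
    rewrite -(inj_eq enum_rank_inj).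
    move=> hne; case: (ltngtP (enum_rank x.1) (enum_rank x.2)) => //.
    by move=> /val_inj e; rewrite e eqxx in hne.
  apply: leq_trans (leq_cardU _ _) _.
  move: h1 h2; rewrite /Fr /P0; move: #|O1| #|O2| => n1 n2; lia.
set n := #|(fun i : N * N => F i.1 i.2 && E (A i.1) (A i.2))| in hO *.
have h3 : phi * n%:R <= phi * (2 * (Fr (init_state V F))%:R).
  apply: ler_wpM2l; first exact: ltW.
  have -> : 2 * (Fr (init_state V F))%:R = ((2 * Fr (init_state V F))%N)%:R :> R.
    by rewrite natrM.
  by rewrite ler_nat.
have h4 : ((#|[set i | u i (A i)]|)%:R : R) <= (Ucap (init_state V F))%:R by rewrite ler_nat.
by rewrite /Q -mulr_natr; move: h3 h4; lra.
Qed.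

Lemma GInv_init : GInv (init_state V F).
Proof.
split => //=.
- by move=> i j v; rewrite ffunE.
- right => p hp k hk; split => //; by rewrite ffunE.
Qed.

Lemma main_sec : c0 * OPT E u F phi <=
  expect E u compl strat (init_state V F) (SW E u F phi).
Proof.
have hP : Phi (init_state V F) <= ev (3 * #|N|).+1 (init_state V F) (SW E u F phi).
  apply: (Pot (K := (3 * #|N|).+1)) => //; first exact: GInv_init.
  by have := max_card [set i | alloc (init_state V F) i == None]; move: #|_| => n; lia.
have hG : Gain (alloc (init_state V F)) = 0 by rewrite /Gain big1 // => k _; rewrite /G ffunE.
move: hP; rewrite /Phi hG add0r => hP.
apply: le_trans hP; apply: ler_wpM2l; first exact: c0_ge0.
exact: OPT_le.
Qed.
End Proof.

Theorem theoremA1 (R : realFieldType) (N V : finType)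
    (E : rel V) (u : N -> V -> bool) (F : rel N) (phi : R)
    (hNV : #|N| = #|V|)
    (hEsym : symmetric E)
    (hFsym : symmetric F) (hFirr : irreflexive F)
    (hdeg : forall i : N, (#|[set j | F i j]| <= 1)%N)
    (hdeg1 : exists i j : N, F i j)
    (hphi0 : 0 < phi) (hphi1 : phi < 1)
    (compl : state N V -> {ffun N -> V})
    (hcompl : valid_completion compl)
    (strat : state N V -> V)
    (hstrat : spe E u F phi compl strat) :
  phi / (4 * phi + 4) * OPT E u F phi <=
    expect E u compl strat (init_state V F) (SW E u F phi).
Proof.
exact: (@main_sec R N V E u F phi hNV hEsym hFsym hFirr hdeg hphi0 hphi1 compl strat hcompl hstrat).
Qed.
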